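(* Let $q$ be a prime power with $n\mid q-1$, let $\zeta_n\in\mathbb{F}_q$ be a primitive $n$-th root of unity and $g\ge1$. Then the number of $\operatorname{PGl}_n(\mathbb{F}_q)$-conjugacy classes (under simultaneous conjugation) of tuples $(A_1,B_1,\dots,A_g,B_g)\in\operatorname{Sl}_n(\mathbb{F}_q)^{2g}$ with $[A_1,B_1]\cdots[A_g,B_g]=\zeta_nI$ equals the number of such tuples divided by $|\operatorname{PGl}_n(\mathbb{F}_q)|$.
   Context: $[A,B]=ABA^{-1}B^{-1}$. The set of these conjugacy classes is what the paper calls the set of $\mathbb{F}_q$-points of the twisted character variety $\mathcal{M}^g(\operatorname{Sl}_n)(q)$. *)

(* Defs.v *)
From HB Require Import structures.
From mathcomp Require Import all_boot all_order all_algebra all_fingroup.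
Set Implicit Arguments. Unset Strict Implicit. Unset Printing Implicit Defensive.
Import GRing.Theory.
Local Open Scope ring_scope.

(* Matrices of size m.+1 (the paper's n is m.+1). *)
Section Defs.
Variables (F : finFieldType) (m g : nat).

Notation Mat := 'M[F]_m.+1.

Definition tuple_t := {ffun 'I_g -> Mat * Mat}.

Definition mxcomm (A B : Mat) : Mat := A *m B *m invmx A *m invmx B.

Definition prod_comm (t : tuple_t) : Mat :=
  \big[mulmx/1%:M]_(i < g) mxcomm (t i).1 (t i).2.

Definition twisted_tuples (z : F) : {set tuple_t} :=
  [set t : tuple_t | [forall i, (\det (t i).1 == 1) && (\det (t i).2 == 1)]
                     && (prod_comm t == z%:M)].

Definition conj_tuple (P : Mat) (t : tuple_t) : tuple_t :=
  [ffun i => (P *m (t i).1 *m invmx P, P *m (t i).2 *m invmx P)].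

Definition GL_scalars : {set {'GL_m.+1[F]}} :=
  [set x : {'GL_m.+1[F]} | is_scalar_mx (GLval x)].

Definition PGL := ('GL_m.+1[F] / GL_scalars)%g.

(* orbits of the simultaneous conjugation action (scalars act trivially,
   so these are exactly the PGl_n(F)-orbits) *)
Definition conj_orbit (t : tuple_t) : {set tuple_t} :=
  [set conj_tuple (GLval P) t | P : {'GL_m.+1[F]}].

Definition conj_classes (z : F) : {set {set tuple_t}} :=
  [set conj_orbit t | t in twisted_tuples z].

End Defs.

(* Main.v *)
Require Import Defs.
From HB Require Import structures.
From mathcomp Require Import all_boot all_order all_algebra all_fingroup.
From mathcomp Require Import mxrepresentation.
Import MatrixGenField.
Set Implicit Arguments. Unset Strict Implicit. Unset Printing Implicit Defensive.
Import GRing.Theory.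
Local Open Scope ring_scope.
Section Core.
Variables (K : fieldType) (gT : finGroupType) (G : {group gT}) (k g : nat).
Variable r : mx_representation K G k.

Lemma det_comm_prod (a b : 'I_g -> gT) :
  (forall i, a i \in G) -> (forall i, b i \in G) ->
  \det (r (\prod_i (a i * b i * (a i)^-1 * (b i)^-1))%g) = 1.
Proof.
move=> aG bG.
pose P x := (x \in G) && (\det (r x) == 1).
suff /andP[_ /eqP //] : P (\prod_i (a i * b i * (a i)^-1 * (b i)^-1))%g.
apply: (big_ind P).
- by rewrite /P group1 repr_mx1 det1 eqxx.
- move=> x y /andP[Gx /eqP dx] /andP[Gy /eqP dy].
  by rewrite /P groupM // repr_mxM // det_mulmx dx dy mulr1 eqxx.
- move=> i _; have Ga := aG i; have Gb := bG i.
  have ua : \det (r (a i)) != 0 by rewrite -unitfE -unitmxE repr_mx_unit.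
  have ub : \det (r (b i)) != 0 by rewrite -unitfE -unitmxE repr_mx_unit.
  rewrite /P !groupM ?groupV //= !repr_mxM ?groupM ?groupV //.
  rewrite !repr_mxV // !det_mulmx !det_inv.
  set x := \det (r (a i)) in ua *; set y := \det (r (b i)) in ub *.
  by rewrite [x * y]mulrC -(mulrA y) divff // mulr1 divff.
Qed.

Lemma comm_scalar_pow (a b : 'I_g -> gT) (z : K) :
  (forall i, a i \in G) -> (forall i, b i \in G) ->
  r (\prod_i (a i * b i * (a i)^-1 * (b i)^-1))%g = z%:M -> z ^+ k = 1.
Proof.
by move=> aG bG e; rewrite -det_scalar -e det_comm_prod.
Qed.

Lemma submod_scalar (U : 'M[K]_k) (Umod : mxmodule r U) x z :
  r x = z%:M -> submod_mx Umod x = z%:M.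
Proof.
move=> e; rewrite /submod_mx e mul_mx_scalar linearZ /= val_submodK.
by rewrite scalemx1.
Qed.

End Core.

Lemma prim_contra (K : fieldType) n (z : K) k :
  n.-primitive_root z -> (0 < k < n)%N -> z ^+ k = 1 -> False.
Proof.
move=> pz /andP[k0 kn] e.
have := prim_order_dvd pz k; rewrite e eqxx => /(dvdn_leq k0).
by rewrite leqNgt kn.
Qed.

Lemma stab_scalar (F : finFieldType) m g (z : F) (t : tuple_t F m g)
    (p : {'GL_m.+1[F]}) :
  m.+1.-primitive_root z -> t \in twisted_tuples m g z ->
  (forall i, GLval p *m (t i).1 = (t i).1 *m GLval p) ->
  (forall i, GLval p *m (t i).2 = (t i).2 *m GLval p) -> is_scalar_mx (GLval p).
Proof.
move=> pz; rewrite inE => /andP[/forallP dets /eqP tz] c1 c2.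
pose mk (M : 'M[F]_m.+1) : {'GL_m.+1[F]} := insubd (1%g : {'GL_m.+1[F]}) M.
have mkK M : \det M = 1 -> GLval (mk M) = M.
  move=> dM; rewrite /mk insubdK //.
  by rewrite -topredE /= unitmxE dM unitr1.
pose a i := mk (t i).1; pose b i := mk (t i).2.
have ea i : GLval (a i) = (t i).1 by rewrite mkK //; case/andP: (dets i) => /eqP.
have eb i : GLval (b i) = (t i).2 by rewrite mkK //; case/andP: (dets i) => _ /eqP.
pose G := 'C[p]%G.
have aG i : a i \in G.
  rewrite cent1E; apply/eqP/val_inj; change (GLval (a i * p)%g = GLval (p * a i)%g); rewrite !GL_MxE ea; exact/esym/c1.
have bG i : b i \in G.
  rewrite cent1E; apply/eqP/val_inj; change (GLval (b i * p)%g = GLval (p * b i)%g); rewrite !GL_MxE eb; exact/esym/c2.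
have rGP : mx_repr G (fun x : {'GL_m.+1[F]} => GLval x) by split.
pose rG := MxRepresentation rGP.
pose c := (\prod_i (a i * b i * (a i)^-1 * (b i)^-1))%g.
have Gc : c \in G by apply: group_prod => i _; rewrite !groupM ?groupV.
have rc : rG c = z%:M.
  have gm : {morph (fun x : {'GL_m.+1[F]} => GLval x) : x y / (x * y)%g >-> x *m y}.
    by move=> x y; rewrite GL_MxE.
  have g1 : GLval (1%g : {'GL_m.+1[F]}) = 1%:M by [].
  rewrite /= /c -tz /prod_comm (big_morph _ gm g1).
  by apply: eq_bigr => i _; rewrite !GL_MxE !GL_VxE ea eb.
have irr : mx_irreducible rG.
  apply/mx_irrP; split=> // U Umod nzU.
  apply: contraT => nfull.
  have := comm_scalar_pow (r := submod_repr Umod) aG bG (submod_scalar Umod rc).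
  move=> e; exfalso; apply: (prim_contra pz _ e).
  rewrite lt0n mxrank_eq0 nzU /=.
  move: nfull; rewrite /row_full ltn_neqAle => ->; exact: rank_leq_col.
have cGA : centgmx rG (GLval p).
  apply/centgmxP => x; rewrite cent1E => /eqP/(congr1 val) /=.
  by change (GLval (x * p)%g = GLval (p * x)%g -> GLval p *m GLval x = GLval x *m GLval p); rewrite !GL_MxE.
rewrite -mxminpoly_linear_is_scalar leqNgt; apply/negP => d1.
case: (non_linear_gen_reducible irr cGA d1) => V /and4P[Vmod _ nzV ltV].
pose rGf := map_repr (gen irr cGA) rG.
have rcf : rGf c = (gen irr cGA z)%:M by rewrite map_reprE rc map_scalar_mx.
have := comm_scalar_pow (r := submod_repr Vmod) aG bG (submod_scalar Vmod rcf).
move=> /eqP; rewrite -rmorphXn fmorph_eq1 => /eqP e.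
apply: (prim_contra pz _ e); rewrite lt0n mxrank_eq0 nzV /=.
by rewrite mxrank1 in ltV.
Qed.

Section Count.
Variables (F : finFieldType) (m g : nat).
Notation GLT := {'GL_m.+1[F]}.
Notation T := (tuple_t F m g).

Lemma invmxM (A B : 'M[F]_m.+1) : A \in unitmx -> B \in unitmx ->
  invmx (A *m B) = invmx B *m invmx A.
Proof. by move=> uA uB; exact: (@invrM _ A B). Qed.

Lemma conj_tupleM (A B : 'M[F]_m.+1) (t : T) : A \in unitmx -> B \in unitmx ->
  conj_tuple (A *m B) t = conj_tuple A (conj_tuple B t).
Proof.
move=> uA uB; apply/ffunP => i; rewrite !ffunE /= invmxM //.
by rewrite !mulmxA.
Qed.

Lemma conj_tuple1 (t : T) : conj_tuple 1%:M t = t.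
Proof.
apply/ffunP => i; rewrite !ffunE /= invmx1 !mul1mx !mulmx1.
by case: (t i).
Qed.

Definition cact (t : T) (P : GLT) : T := conj_tuple (GLval (P^-1)%g) t.

Lemma cact1 : cact^~ 1%g =1 id.
Proof. by move=> t; rewrite /cact invg1; exact: conj_tuple1. Qed.

Lemma cactM : forall x, act_morph cact x.
Proof.
move=> t a b; by rewrite /cact invMg GL_MxE conj_tupleM // ?(GL_unitmx (a^-1)%g) ?(GL_unitmx (b^-1)%g).
Qed.

Definition cact_action := TotalAction cact1 cactM.


Lemma conj_comm (P A : 'M[F]_m.+1) : P \in unitmx ->
  (invmx P *m A *m P = A) <-> (P *m A = A *m P).
Proof.
move=> uP; split=> e.
  by rewrite -{1}e !mulmxA mulmxV // mul1mx.
by rewrite -mulmxA -e mulmxA mulVmx // mul1mx.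
Qed.

Lemma cact_eq (t : T) (P : GLT) :
  cact t P = t <->
  (forall i, GLval P *m (t i).1 = (t i).1 *m GLval P) /\
  (forall i, GLval P *m (t i).2 = (t i).2 *m GLval P).
Proof.
have uP : GLval P \in unitmx by exact: (GL_unitmx P).
rewrite /cact GL_VxE; split.
  move=> e; split=> i.
    have := congr1 (fun f : T => (f i).1) e; rewrite /= ffunE /= invmxK => e1.
    exact: (proj1 (conj_comm _ uP) e1).
  have := congr1 (fun f : T => (f i).2) e; rewrite /= ffunE /= invmxK => e1.
  exact: (proj1 (conj_comm _ uP) e1).
move=> [c1 c2]; apply/ffunP => i; rewrite ffunE invmxK.
have := proj2 (conj_comm _ uP) (c1 i); have := proj2 (conj_comm _ uP) (c2 i).
by move=> -> ->; case: (t i).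
Qed.

Lemma conj_mx_mul (Q : 'M[F]_m.+1) : Q \in unitmx ->
  {morph (fun M => Q *m M *m invmx Q) : M N / M *m N}.
Proof.
by move=> uQ M N /=; rewrite !mulmxA mulmxKV.
Qed.

Lemma conj_mx_inv (Q M : 'M[F]_m.+1) : Q \in unitmx -> M \in unitmx ->
  invmx (Q *m M *m invmx Q) = Q *m invmx M *m invmx Q.
Proof.
move=> uQ uM; rewrite !invmxM ?invmxK ?mulmxA //.
all: try by rewrite unitmx_inv.
all: try by rewrite unitmx_mul uQ.
Qed.


Lemma cact_tw z (t : T) (P : GLT) :
  t \in twisted_tuples m g z -> cact t P \in twisted_tuples m g z.
Proof.
set Q := GLval (P^-1)%g.
have uQ : Q \in unitmx by exact: (GL_unitmx (P^-1)%g).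
have dQ : \det Q != 0 by rewrite -unitfE -unitmxE.
rewrite !inE => /andP[/forallP dets /eqP tz]; apply/andP; split.
  have dc (R M : 'M[F]_m.+1) : R \in unitmx -> \det (R *m M *m invmx R) = \det M.
    move=> uR; have dR : \det R != 0 by rewrite -unitfE -unitmxE.
    by rewrite !det_mulmx det_inv mulrAC divff // mul1r.
  by apply/forallP => i; rewrite /cact ffunE /= -/Q !dc.
have dU i : (t i).1 \in unitmx /\ (t i).2 \in unitmx.
  by case/andP: (dets i) => /eqP d1 /eqP d2; rewrite !unitmxE d1 d2 unitr1.
apply/eqP; rewrite /prod_comm.
rewrite (eq_bigr (fun i => Q *m mxcomm (t i).1 (t i).2 *m invmx Q)); last first.
  move=> i _; rewrite /cact ffunE /= /mxcomm.
  case: (dU i) => u1 u2.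
  by rewrite !conj_mx_inv // -!(conj_mx_mul uQ).
rewrite -(big_morph _ (conj_mx_mul uQ) (id2 := 1%:M)); last first.
  by rewrite mulmx1 mulmxV.
by rewrite -/(prod_comm t) tz scalar_mxC -mulmxA mulmxV // mulmx1.
Qed.

End Count.

Section Final.
Variables (F : finFieldType) (m g : nat).
Notation GLT := {'GL_m.+1[F]}.
Notation T := (tuple_t F m g).

Lemma stab_eq z (t : T) : m.+1.-primitive_root z -> t \in twisted_tuples m g z ->
  ('C_[set: GLT][t | cact_action F m g])%g = GL_scalars F m.
Proof.
move=> pz tS; rewrite setTI; apply/setP => P; rewrite [RHS]inE.
apply/astab1P/idP.
  by move/cact_eq => [c1 c2]; exact: (stab_scalar pz tS c1 c2).
move=> /is_scalar_mxP[a ea]; apply/cact_eq; split=> i; rewrite ea;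
  by rewrite scalar_mxC.
Qed.

Lemma orbit_eq (t : T) : conj_orbit t = orbit (cact_action F m g) [set: GLT] t.
Proof.
apply/setP => u; apply/imsetP/imsetP => [[P _ ->]|[P _ ->]].
  by exists (P^-1)%g; rewrite ?in_setT //= /cact invgK.
by exists (P^-1)%g.
Qed.

Lemma scalars_group_set : group_set (GL_scalars F m).
Proof.
apply/group_setP; split.
  by rewrite inE; apply/is_scalar_mxP; exists 1.
move=> x y; rewrite !inE => /is_scalar_mxP[a ea] /is_scalar_mxP[b eb].
by apply/is_scalar_mxP; exists (a * b); rewrite GL_MxE ea eb mul_scalar_mx scale_scalar_mx.
Qed.

Definition scalars_group := Group scalars_group_set.

Lemma card_PGL : #|PGL F m| = #|[set: GLT] : GL_scalars F m|%g.
Proof.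
rewrite /PGL -[GL_scalars F m]/(gval scalars_group) card_quotient //.
apply: cents_norm; apply/centsP => x _ y; rewrite inE => /is_scalar_mxP[a ea].
by apply/val_inj; change (GLval (x * y)%g = GLval (y * x)%g); rewrite !GL_MxE ea -scalar_mxC.
Qed.

Lemma count_main (z : F) : m.+1.-primitive_root z ->
  #|twisted_tuples m g z| = (#|conj_classes m g z| * #|PGL F m|)%N.
Proof.
move=> pz.
have acts : [acts [set: GLT], on twisted_tuples m g z | cact_action F m g].
  apply/subsetP => P _; rewrite !inE; apply/subsetP => t tS.
  by rewrite inE; exact: cact_tw.
rewrite (card_partition (orbit_partition acts)).
have -> : conj_classes m g z = orbit (cact_action F m g) [set: GLT] @: twisted_tuples m g z.
  by apply: eq_imset => t; exact: orbit_eq.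
rewrite -sum_nat_const; apply: eq_bigr => A /imsetP[t tS ->].
by rewrite card_orbit (stab_eq pz tS) card_PGL.
Qed.

End Final.

Unset Implicit Arguments.
Theorem corollary3p3 (F : finFieldType) (n g : nat) (zeta : F) :
  (0 < n)%N -> (n %| #|F| - 1)%N -> n.-primitive_root zeta -> (1 <= g)%N ->
  (#|conj_classes n.-1 g zeta|%:R : rat)
    = (#|twisted_tuples n.-1 g zeta|%:R) / (#|PGL F n.-1|%:R).
Proof.
move=> n0 _ pz _.
have pz' : n.-1.+1.-primitive_root zeta by rewrite prednK.
rewrite (count_main g pz') natrM mulfK // Num.Theory.pnatr_eq0 -lt0n card_PGL.
exact: indexg_gt0.
Qed.
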